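(* Let $G\subset GL(V)$ be a reflection group. The following are equivalent: (1) $\ell(g)=\operatorname{codim}(g)$ for every $g\in G$; (2) $\ell(g)=\operatorname{codim}(g)$ for every codimension atom $g\in G$; (3) every codimension atom of $G$ is a reflection; (4) for every $g\neq 1$ in $G$ there exists a reflection $s\in G$ such that $\operatorname{codim}(gs)<\operatorname{codim}(g)$.
   Context: $V$ is a finite-dimensional vector space of dimension $n$ over $\mathbb{R}$ or $\mathbb{C}$. A reflection is an element of $GL(V)$ of finite order fixing a hyperplane pointwise; a reflection group is a finite subgroup of $GL(V)$ generated by reflections. $\ell(g)$ is the minimal number of reflections of $G$ whose product is $g$ ($\ell(1)=0$). $\operatorname{codim}(g)=n-\dim\{v\in V:gv=v\}$. The codimension order is the partial order on $G$ given by $a\le_\perp c$ iff $\operatorname{codim}(a)+\operatorname{codim}(a^{-1}c)=\operatorname{codim}(c)$; a codimension atom is an element covering the identity $1$ (the minimum) in this poset. *)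

(* Defs.v *)
From mathcomp Require Import all_boot all_order all_algebra.
From mathcomp Require Import complex.
From mathcomp Require Import reals.
Set Implicit Arguments. Unset Strict Implicit. Unset Printing Implicit Defensive.
Import Order.TTheory GRing.Theory Num.Theory.
Local Open Scope ring_scope.

(* V = row vectors 'rV[F]_n; a matrix g acts by v |-> v *m g.
   A finite subgroup of GL(V) is given by the finite list G of its elements. *)

Section Defs.
Variables (F : fieldType) (n : nat).
Implicit Types (g h : 'M[F]_n) (G : seq 'M[F]_n).

Definition fixspace g : 'M[F]_n := kermx (g - 1%:M).

Definition codim g : nat := (n - \rank (fixspace g))%N.

Definition is_reflection g : Prop :=
  g \in unitmx /\ (exists k, (0 < k)%N /\ iter k (mulmx g) 1%:M = 1%:M) /\ g != 1%:M /\
  exists H : 'M[F]_n, \rank H = n.-1 /\ (H <= fixspace g)%MS.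

Definition is_finite_subgroup G : Prop :=
  1%:M \in G /\ (forall g, g \in G -> g \in unitmx) /\
  (forall g h, g \in G -> h \in G -> g *m h \in G) /\
  (forall g, g \in G -> invmx g \in G).

Definition refl_factorization G g (s : seq 'M[F]_n) : Prop :=
  (forall r, r \in s -> r \in G /\ is_reflection r) /\
  g = foldr (fun r acc => r *m acc) 1%:M s.

Definition is_reflection_group G : Prop :=
  is_finite_subgroup G /\
  forall g, g \in G -> exists s, refl_factorization G g s.

Definition refl_length_is G g (k : nat) : Prop :=
  (exists s, refl_factorization G g s /\ size s = k) /\
  (forall s, refl_factorization G g s -> (k <= size s)%N).

Definition codim_le a c : Prop := (codim a + codim (invmx a *m c))%N = codim c.

Definition codim_atom G g : Prop :=
  g \in G /\ g != 1%:M /\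
  forall h, h \in G -> codim_le 1%:M h -> codim_le h g -> h = 1%:M \/ h = g.

Definition TFAE_thm4 G : Prop :=
  is_reflection_group G ->
  [/\ ((forall g, g \in G -> refl_length_is G g (codim g)) <->
       (forall g, codim_atom G g -> refl_length_is G g (codim g))),
      ((forall g, codim_atom G g -> refl_length_is G g (codim g)) <->
       (forall g, codim_atom G g -> is_reflection g)) &
      ((forall g, codim_atom G g -> is_reflection g) <->
       (forall g, g \in G -> g != 1%:M ->
          exists2 s, s \in G /\ is_reflection s & (codim (g *m s) < codim g)%N))].

End Defs.

(* Main.v *)
Require Import Defs.
From mathcomp Require Import all_boot all_order all_algebra.
From mathcomp Require Import complex reals.
From Stdlib Require Import Classical.
From mathcomp Require Import zify.
Set Implicit Arguments. Unset Strict Implicit. Unset Printing Implicit Defensive.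
Import GRing.Theory.
Local Open Scope ring_scope.

Section Proof.
Variables (F : fieldType) (n : nat).
Implicit Types (g h a b r k : 'M[F]_n) (G : seq 'M[F]_n) (s t : seq 'M[F]_n).

Lemma codim_rank g : codim g = \rank (g - 1%:M).
Proof.
rewrite /codim /fixspace mxrank_ker.
have := rank_leq_col (g - 1%:M); lia.
Qed.

Lemma rank_unitl (U : 'M[F]_n) m (A : 'M[F]_(n, m)) :
  U \in unitmx -> \rank (U *m A) = \rank A.
Proof.
move=> HU; apply/eqP; rewrite eqn_leq mxrankM_maxr /=.
by rewrite -{1}(mulKmx HU A) mxrankM_maxr.
Qed.

Lemma codim1 : codim (1%:M : 'M[F]_n) = 0%N.
Proof. by rewrite codim_rank subrr mxrank0. Qed.

Lemma codim_eq0 g : codim g = 0%N -> g = 1%:M.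
Proof.
rewrite codim_rank => /eqP; rewrite mxrank_eq0 subr_eq0 => /eqP //.
Qed.

Lemma codim_gt0 g : g != 1%:M -> (0 < codim g)%N.
Proof.
move=> Hg; rewrite lt0n; apply/eqP => /codim_eq0 E; by rewrite E eqxx in Hg.
Qed.

Lemma codimM a b : (codim (a *m b) <= codim a + codim b)%N.
Proof.
rewrite !codim_rank.
have -> : a *m b - 1%:M = (a - 1%:M) *m b + (b - 1%:M).
  by rewrite mulmxBl mul1mx addrA subrK.
apply: leq_trans (mxrank_add _ _) _.
by rewrite leq_add2r mxrankM_maxl.
Qed.

Lemma codimVl a b : a \in unitmx -> codim (invmx a *m b) = \rank (b - a).
Proof.
move=> Ha; rewrite codim_rank.
have -> : invmx a *m b - 1%:M = invmx a *m (b - a).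
  by rewrite mulmxBr mulVmx.
by rewrite rank_unitl // unitmx_inv.
Qed.

Lemma codimV a : a \in unitmx -> codim (invmx a) = codim a.
Proof.
move=> Ha; rewrite -[invmx a]mulmx1 codimVl // codim_rank -mxrank_opp opprB //.
Qed.

Lemma codim_refl r : is_reflection r -> codim r = 1%N.
Proof.
move=> [_ [_ [Hne [H [rH sH]]]]].
have := codim_gt0 Hne; have := mxrankS sH; rewrite rH /codim; lia.
Qed.

Lemma fact_bound {G} {g} {s} : refl_factorization G g s -> (codim g <= size s)%N.
Proof.
elim: s g => [|r s IH] g [Hs ->] /=; first by rewrite codim1.
apply: leq_trans (codimM _ _) _.
have [_ Hr] := Hs r (mem_head _ _).
rewrite codim_refl // add1n ltnS; apply: IH; split => //.
by move=> x Hx; apply: Hs; rewrite in_cons Hx orbT.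
Qed.

Variable G : seq 'M[F]_n.
Hypothesis hG : is_finite_subgroup G.

Lemma unitG g : g \in G -> g \in unitmx.
Proof. by case: hG => _ [H _]; apply: H. Qed.
Lemma mulG g h : g \in G -> h \in G -> g *m h \in G.
Proof. by case: hG => _ [_ [H _]]; apply: H. Qed.
Lemma invG g : g \in G -> invmx g \in G.
Proof. by case: hG => _ [_ [_ H]]; apply: H. Qed.
Lemma oneG : 1%:M \in G.
Proof. by case: hG. Qed.

Lemma codim_le_trans k h g : k \in G -> h \in G -> g \in G ->
  codim_le k h -> codim_le h g -> codim_le k g.
Proof.
rewrite /codim_le => kG hG' gG E1 E2.
have Ek : invmx k *m g = (invmx k *m h) *m (invmx h *m g).
  by rewrite -mulmxA mulKVmx // unitG.
have B1 := codimM (invmx k *m h) (invmx h *m g).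
have B2 := codimM k (invmx k *m g).
rewrite mulKVmx ?unitG // in B2.
rewrite -Ek in B1; lia.
Qed.

Lemma atom_exists g : g \in G -> g != 1%:M ->
  exists a, codim_atom G a /\ codim_le a g.
Proof.
move=> gG gn1.
suff : forall m h, (codim h <= m)%N -> h \in G -> h != 1%:M -> codim_le h g ->
  exists a, codim_atom G a /\ codim_le a g.
  move=> /(_ (codim g) g (leqnn _) gG gn1); apply.
  by rewrite /codim_le mulVmx ?unitG // codim1 addn0.
elim=> [|m IH] h.
  by rewrite leqn0 => /eqP /codim_eq0 -> _; rewrite eqxx.
move=> Hm hG' hn1 hle.
case: (classic (codim_atom G h)) => [Ha|Hna]; first by exists h.
have : ~ (forall k, k \in G -> codim_le 1%:M k -> codim_le k h ->
            k = 1%:M \/ k = h).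
  by move=> Hall; apply: Hna; split => //; split.
move=> /not_all_ex_not [k Hk].
have kG : k \in G by apply: NNPP => Hn; apply: Hk => /Hn.
have kle : codim_le k h.
  by apply: NNPP => Hn; apply: Hk => _ _ /Hn.
have kn : ~ (k = 1%:M \/ k = h) by move=> Ho; apply: Hk.
have kn1 : k != 1%:M by apply/eqP => E; apply: kn; left.
have knh : k != h by apply/eqP => E; apply: kn; right.
apply: (IH k) => //; last exact: (codim_le_trans kG hG' gG).
move: kle; rewrite /codim_le codimVl ?unitG // => E.
have : (0 < \rank (h - k)%R)%N.
  by rewrite lt0n mxrank_eq0 subr_eq0 eq_sym.
lia.
Qed.

Definition P1 := forall g, g \in G -> refl_length_is G g (codim g).
Definition P2 := forall g, codim_atom G g -> refl_length_is G g (codim g).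
Definition P3 := forall g, codim_atom G g -> is_reflection g.
Definition P4 := forall g, g \in G -> g != 1%:M ->
          exists2 s, s \in G /\ is_reflection s & (codim (g *m s) < codim g)%N.

Lemma P12 : P1 -> P2.
Proof. by move=> H g [gG _]; apply: H. Qed.

Lemma P23 : P2 -> P3.
Proof.
move=> H g Hat; have [gG [gn1 Hmin]] := Hat.
have [[s [[Hs Hg] Hsz]] _] := H g Hat.
case: s Hs Hg Hsz => [|r t] Hs Hg Hsz.
  by move: gn1; rewrite Hg /= eqxx.
have [rG rR] := Hs r (mem_head _ _).
have Ht : refl_factorization G (foldr (fun r acc => r *m acc) 1%:M t) t.
  by split => // x Hx; apply: Hs; rewrite in_cons Hx orbT.
have Bt := fact_bound Ht.
have cr := codim_refl rR.
have Hg' : g = r *m foldr (fun r acc => r *m acc) 1%:M t by exact: Hg.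
move: Bt Hg'; set rest := foldr _ _ t => Bt Hg'.
have Hle : codim_le r g.
  have := codimM r rest.
  rewrite /codim_le -Hg' cr; rewrite {2}Hg' mulKmx ?unitG //; move: Hsz => /= Hsz.
  move: (codim rest) (codim g) Bt Hsz => x y; lia.
have : codim_le 1%:M r by rewrite /codim_le invmx1 mul1mx codim1.
move=> H1; case: (Hmin r rG H1 Hle) => [E|<-] //.
by case: rR => _ [_ [Hn _]]; move: Hn; rewrite E eqxx.
Qed.

Lemma P34 : P3 -> P4.
Proof.
move=> H g gG gn1.
have giG := invG gG.
have gin1 : invmx g != 1%:M.
  by apply: contraNneq gn1 => E; rewrite -(invmxK g) E invmx1.
have [a [Hat Hle]] := atom_exists giG gin1.
have [aG _] := Hat.
exists a; first by split => //; apply: H.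
have Ha0 : (0 < codim a)%N by apply: codim_gt0; case: Hat => _ [].
move: Hle; rewrite /codim_le codimVl ?unitG //.
have -> : invmx g - a = invmx g *m (1%:M - g *m a).
  by rewrite mulmxBr mulmx1 mulmxA mulVmx ?unitG // mul1mx.
rewrite rank_unitl ?unitmx_inv ?unitG // -mxrank_opp opprB -codim_rank.
have -> : codim (invmx g) = codim g.
  by rewrite codimV ?unitG.
lia.
Qed.

Lemma P41 : P4 -> P1.
Proof.
move=> H.
suff Hex : forall m g, (codim g <= m)%N -> g \in G ->
  exists s, refl_factorization G g s /\ (size s <= codim g)%N.
  move=> g gG; have [s [Hs Hsz]] := Hex _ g (leqnn _) gG.
  rewrite /refl_length_is; split; last by move=> t Ht; exact: (fact_bound Ht).
  by exists s; split => //; apply/eqP; rewrite eqn_leq Hsz (fact_bound Hs).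
elim=> [|m IH] g.
  rewrite leqn0 => /eqP /codim_eq0 -> _; exists [::]; split => //.
move=> Hm gG.
case: (eqVneq g 1%:M) => [->|gn1].
  exists [::]; split => //.
have giG := invG gG.
have gin1 : invmx g != 1%:M.
  by apply: contraNneq gn1 => E; rewrite -(invmxK g) E invmx1.
have [s [sG sR] Hlt] := H _ giG gin1.
set h := invmx s *m g.
have hG' : h \in G by apply: mulG => //; apply: invG.
have Ech : codim h = codim (invmx g *m s).
  rewrite /h !codimVl ?unitG // -mxrank_opp opprB //.
have Egi : codim (invmx g) = codim g.
  by rewrite codimV ?unitG.
rewrite Egi in Hlt.
have Hh : (codim h <= m)%N by rewrite Ech -ltnS (leq_trans Hlt Hm).
have [t [[Ht Hth] Htsz]] := IH h Hh hG'.
exists (s :: t); split; last first.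
  by rewrite /= -Ech in Hlt *; apply: leq_ltn_trans Htsz Hlt.
split.
  move=> x; rewrite in_cons => /orP [/eqP ->|Hx]; first by split.
  by apply: Ht.
by rewrite /= -Hth /h mulKVmx ?unitG.
Qed.

Lemma TFAE_gen : TFAE_thm4 G.
Proof.
move=> _.
have A := P12; have B := P23; have C := P34; have D := P41.
split; split.
- exact: P12.
- by move=> H2; apply: P41; apply: P34; apply: P23.
- exact: P23.
- by move=> H3; apply: P12; apply: P41; apply: P34.
- exact: P34.
- by move=> H4; apply: P23; apply: P12; apply: P41.
Qed.

End Proof.

Theorem mainTheorem4 (R : realType) (n : nat) :
  (forall G : seq 'M[R]_n, TFAE_thm4 G) /\
  (forall G : seq 'M[R[i]]_n, TFAE_thm4 G).
Proof.
split => G hRG; apply: TFAE_gen => //; by case: hRG.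
Qed.
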